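(* Let $F$ be an infinite field of characteristic $p>2$ and $k$ a positive integer. Let $x^i_1,\dots,x^i_{h_i}$ ($i=1,\dots,k$) be distinct variables, $x^i_t$ of degree $i$, and consider the graded monomial $T=(x^1_1)^{r^1_1}\cdots(x^1_{h_1})^{r^1_{h_1}}\cdots(x^k_1)^{r^k_1}\cdots(x^k_{h_k})^{r^k_{h_k}}$ with non-negative integer exponents. Let $r=\max\{r^i_t\}$. If $p>r$, then $T$ is not a $\mathbb{Z}$-graded identity of $E^{\infty}$.
   Context: $L$ is a vector space over $F$ with basis $e_1,e_2,\dots$, $E$ its unital Grassmann algebra (basis $1$ and $e_{i_1}\cdots e_{i_k}$, $i_1<\cdots<i_k$, with $e_ie_j=-e_je_i$). $E^{\infty}$ is $E$ with the $\mathbb{Z}$-grading induced by $\|e_i\|=0$ for $i$ even and $\|e_i\|=1$ for $i$ odd (basis monomials get the sum of degrees of their factors; $1$ has degree $0$). A graded polynomial is a graded identity of $A$ if it vanishes whenever each variable is replaced by an element of the homogeneous component of $A$ of that variable's degree. *)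

(* Defs.v *)
From HB Require Import structures.
From mathcomp Require Import all_boot all_order all_algebra.
From mathcomp Require Import finmap.
Set Implicit Arguments. Unset Strict Implicit. Unset Printing Implicit Defensive.
Import Order.TTheory GRing.Theory Num.Theory.
Local Open Scope ring_scope.
Local Open Scope fset_scope.

(* CONVENTION: the generator e_(n+1) is encoded by the natural number n.
   A basis monomial e_{i_1}...e_{i_k} (i_1 < ... < i_k) is encoded by the
   finite set of (encoded) indices; the empty set encodes 1.
   An element of E is a finitely supported function from basis monomials
   to F (its coordinates). *)
Definition Grass (F : fieldType) := {fsfun {fset nat} -> F with 0}.

Definition ginv (A B : {fset nat}) : nat :=
  (\sum_(x <- A) \sum_(y <- B) (y < x))%N.

(* e_A * e_B = (-1)^(ginv A B) e_(A u B) if A, B disjoint, 0 otherwise *)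
Definition gcoef (F : fieldType) (a b : Grass F) (S : {fset nat}) : F :=
  \sum_(A <- finsupp a) \sum_(B <- finsupp b)
     (if (A `&` B == fset0) && (A `|` B == S)
      then (-1) ^+ ginv A B * a A * b B else 0).

Definition gmul (F : fieldType) (a b : Grass F) : Grass F :=
  [fsfun S in [fset A `|` B | A in finsupp a, B in finsupp b] => gcoef a b S].

Definition gone (F : fieldType) : Grass F :=
  [fsfun S in [fset (fset0 : {fset nat})] => (1 : F)].

Definition gexp (F : fieldType) (x : Grass F) (n : nat) : Grass F :=
  iter n (gmul x) (gone F).

(* Z-grading of E^infty: ||e_j|| = 1 if j odd, 0 if j even.
   With the encoding n <-> e_(n+1), e_(n+1) has degree 1 iff n is even. *)
Definition gdeg (S : {fset nat}) : nat := size [seq n <- S | ~~ odd n].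

Definition ghomog (F : fieldType) (d : nat) (x : Grass F) : Prop :=
  forall S, S \in finsupp x -> gdeg S = d.

(* Value of the graded monomial
   T = (x^1_1)^{r^1_1} ... (x^1_{h_1})^{r^1_{h_1}} ... (x^k_1)^{r^k_1} ... (x^k_{h_k})^{r^k_{h_k}}
   under the substitution x^i_{t+1} |-> a i t (t is 0-based here),
   multiplied left to right in the stated order. *)
Definition gmonomial_eval (F : fieldType) (k : nat) (h : nat -> nat)
  (r : nat -> nat -> nat) (a : nat -> nat -> Grass F) : Grass F :=
  foldl (@gmul F) (gone F)
    (flatten [seq [seq gexp (a i t) (r i t) | t <- iota 0 (h i)] | i <- iota 1 k]).

Definition gzero (F : fieldType) : Grass F := [fsfun S in fset0 => (0 : F)].

(* Main.v *)
Require Import Defs.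
From HB Require Import structures.
From mathcomp Require Import all_boot all_order all_algebra.
From mathcomp Require Import finmap.
Import Order.TTheory GRing.Theory Num.Theory.


Section Aux.
Local Open Scope ring_scope.
Local Open Scope fset_scope.
Variable F : fieldType.

Lemma cond_eq (A B S : {fset nat}) :
  (A `&` B == fset0) && (A `|` B == S) = (A `<=` S) && (B == S `\` A).
Proof.
apply/idP/idP.
  case/andP=> /eqP hI /eqP <-; rewrite fsubsetUl /=; apply/eqP/fsetP=> x.
  rewrite !inE; case xB: (x \in B); case xA: (x \in A) => //=.
  have : x \in A `&` B by rewrite inE xA xB.
  by rewrite hI inE.
case/andP=> /fsubsetP hAS /eqP ->; apply/andP; split; apply/eqP/fsetP=> x;
  rewrite !inE; case xA: (x \in A) => //=.
  by rewrite hAS.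
Qed.

Lemma gmulE (a b : Grass F) (K : {fset {fset nat}}) S :
  finsupp a `<=` K ->
  gmul a b S = \sum_(A <- K) (if A `<=` S then
     (-1) ^+ ginv A (S `\` A) * a A * b (S `\` A) else 0).
Proof.
move=> hK.
have gc : gcoef a b S = \sum_(A <- finsupp a) (if A `<=` S then
     (-1) ^+ ginv A (S `\` A) * a A * b (S `\` A) else 0).
  rewrite /gcoef; apply: eq_bigr => A _.
  under eq_bigr => B _ do rewrite cond_eq.
  case: ifP => hAS /=; last by rewrite big1.
  rewrite -big_mkcond /=.
  case hX: (S `\` A \in finsupp b).
    by rewrite -big_filter filter_pred1_uniq ?fset_uniq // big_seq1.
  by rewrite (fsfun_dflt (negbT hX)) mulr0 big1 // => B /eqP ->; rewrite (fsfun_dflt (negbT hX)) mulr0.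
rewrite -(big_fset_incl _ hK); last first.
  by move=> A _ hA; rewrite (fsfun_dflt hA); case: ifP; rewrite ?mulr0 ?mul0r.
rewrite -gc /gmul fsfun_fun; case: ifP => // /negbT hn.
rewrite /gcoef big_seq big1 // => A hA; rewrite big_seq big1 // => B hB.
case: ifP => // /andP[_ /eqP hS]; case/negP: hn; rewrite -hS.
by apply/imfset2P; exists A => //; exists B.
Qed.
End Aux.


Section Par.
Local Open Scope fset_scope.

Definition pc (A : {fset nat}) := forall n, (n.*2 \in A) = (n.*2.+1 \in A).

Lemma sum_pairs (H : nat -> nat) N :
  (\sum_(x <- iota 0 N.*2) H x = \sum_(n <- iota 0 N) (H n.*2 + H n.*2.+1))%N.
Proof.
elim: N => [|N IH]; first by rewrite !big_nil.
have -> : iota 0 N.+1 = iota 0 N ++ [:: N] by rewrite -addn1 iotaD.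
rewrite doubleS -addn2 iotaD big_cat IH big_cat /= !add0n.
by rewrite !big_cons !big_nil !addn0.
Qed.

Lemma sum_fset_iota (A : {fset nat}) (G : nat -> nat) M :
  (forall x, x \in A -> x < M) ->
  (\sum_(x <- A) G x = \sum_(x <- iota 0 M) (if x \in A then G x else 0))%N.
Proof.
move=> hM; rewrite -[in RHS]big_mkcond -[in RHS]big_filter; apply: perm_big.
apply: uniq_perm; first exact: fset_uniq.
  by rewrite filter_uniq ?iota_uniq.
move=> x; rewrite mem_filter mem_iota add0n /=.
by case xA: (x \in A) => //=; rewrite hM.
Qed.

Lemma ginv_even (A B : {fset nat}) : pc A ->
  (forall x, x \in A -> x \notin B) -> ~~ odd (ginv A B).
Proof.
move=> hpc hdis; rewrite /ginv.
set N := (\sum_(x <- A) x).+1.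
rewrite (@sum_fset_iota _ _ N.*2); last first.
  move=> x xA; apply: (@leq_trans N); last by rewrite -addnn leq_addr.
  rewrite ltnS (big_rem x xA) /=; exact: leq_addr.
rewrite sum_pairs -dvdn2; apply: dvdn_sum => n _.
rewrite -hpc; case xA: (n.*2 \in A); last by [].
have nB := hdis _ xA.
have -> : (\sum_(y <- B) (y < n.*2.+1) = \sum_(y <- B) (y < n.*2))%N.
  rewrite big_seq [RHS]big_seq; apply: eq_bigr => y yB.
  rewrite ltnS leq_eqVlt; case: eqP => //= ey.
  by move: nB; rewrite -ey yB.
by rewrite addnn -mul2n dvdn_mulr.
Qed.

Lemma sign_even (F : fieldType) (A B : {fset nat}) : pc A ->
  (forall x, x \in A -> x \notin B) -> ((-1) ^+ ginv A B = 1 :> F)%R.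
Proof.
move=> h1 h2; rewrite -signr_odd; by rewrite (negbTE (ginv_even A B h1 h2)).
Qed.
End Par.


Section Mono.
Local Open Scope fset_scope.
Local Open Scope ring_scope.
Variable F : fieldType.

Definition mono (A : {fset nat}) (c : F) : Grass F := [fsfun S in [fset A] => c].

Lemma monoE A c S : mono A c S = if S == A then c else 0.
Proof. by rewrite /mono fsfun_fun in_fset1. Qed.

Lemma finsupp_fsub (K : {fset {fset nat}}) (v : {fset nat} -> F) :
  finsupp ([fsfun S in K => v S] : Grass F) `<=` K.
Proof.
by apply/fsubsetP => x; rewrite mem_finsupp fsfun_fun; case: ifP => //; rewrite eqxx.
Qed.

Lemma mono_mul (A B : {fset nat}) (c d : F) : pc A ->
  (forall x, x \in A -> x \notin B) ->
  gmul (mono A c) (mono B d) = mono (A `|` B) (c * d).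
Proof.
move=> hpc hdis; apply/fsfunP => S.
rewrite (gmulE _ _ _ _ _ (finsupp_fsub [fset A] (fun _ => c))) big_seq_fset1.
rewrite !monoE eqxx.
have e1 : (A `|` B) `\` A = B.
  apply/fsetP => x; rewrite !inE; case xA: (x \in A) => /=; last by [].
  by rewrite (negbTE (hdis _ xA)).
case: (eqVneq S (A `|` B)) => [->|hS].
  rewrite fsubsetUl e1 eqxx sign_even ?mul1r //.
case: ifP => // hAS; case: eqP => // hB; last by rewrite mulr0.
case/eqP: hS; rewrite -hB; apply/fsetP => x; rewrite !inE.
by case xA: (x \in A) => //=; rewrite (fsubsetP hAS).
Qed.
End Mono.


Section Pow.
Local Open Scope fset_scope.
Local Open Scope ring_scope.
Variable F : fieldType.
Variable r : nat.
Variable B : nat -> {fset nat}.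
Hypothesis Bne : forall j, (j < r)%N -> B j != fset0.
Hypothesis Bdis : forall j l, (j < r)%N -> (l < r)%N -> j != l ->
  forall x, x \in B j -> x \notin B l.
Hypothesis Bpc : forall j, (j < r)%N -> pc (B j).

Definition KB := seq_fset tt (map B (iota 0 r)).
Definition aB : Grass F := [fsfun S in KB => (1 : F)].
Definition JS (S : {fset nat}) := [seq j <- iota 0 r | B j `<=` S].
Definition cov (S : {fset nat}) :=
  all (fun x => has (fun j => x \in B j) (JS S)) S.
Definition fm (m : nat) (S : {fset nat}) : F :=
  if cov S && (size (JS S) == m) then (m`!)%:R else 0.

Lemma mem_iota0 (j n : nat) : (j \in iota 0 n) = (j < n)%N.
Proof. by rewrite mem_iota add0n. Qed.

Lemma B_inj : {in iota 0 r &, injective B}.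
Proof.
move=> j l; rewrite !mem_iota0 => jr lr ejl.
apply/eqP; apply/negP => /negP njl.
case/fset0Pn: (Bne _ jr) => x xj.
by move: (Bdis _ _ jr lr njl _ xj); rewrite -ejl xj.
Qed.

Lemma sum_KB (G : {fset nat} -> F) :
  \sum_(A <- KB) G A = \sum_(j <- iota 0 r) G (B j).
Proof.
rewrite /KB (perm_big _ (seq_fset_perm _ _)) undup_id ?big_map //.
by rewrite map_inj_in_uniq ?iota_uniq //; apply: B_inj.
Qed.

Lemma H1 j l S : (j < r)%N -> (l < r)%N -> B j `<=` S ->
  (B l `<=` S `\` B j) = (B l `<=` S) && (l != j).
Proof.
move=> jr lr hj; case: (eqVneq l j) => [->|nlj].
  rewrite andbF; apply/negP => /fsubsetP h.
  case/fset0Pn: (Bne _ jr) => x xj; by move: (h _ xj); rewrite inE xj.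
rewrite andbT; apply/fsubsetP/fsubsetP => h x xl.
  by move: (h _ xl); rewrite inE => /andP[].
by rewrite inE (Bdis _ _ lr jr nlj _ xl) h.
Qed.

Lemma H2 j S : (j < r)%N -> B j `<=` S ->
  JS (S `\` B j) = [seq l <- JS S | l != j].
Proof.
move=> jr hj; rewrite /JS -filter_predI; apply: eq_in_filter => l.
by rewrite mem_iota0 /= => lr; rewrite H1 // andbC.
Qed.

Lemma JS_uniq S : uniq (JS S).
Proof. by rewrite filter_uniq ?iota_uniq. Qed.

Lemma memJS l S : (l \in JS S) = (l < r)%N && (B l `<=` S).
Proof. by rewrite mem_filter mem_iota0 andbC. Qed.

Lemma H3 j S : (j < r)%N -> B j `<=` S -> cov (S `\` B j) = cov S.
Proof.
move=> jr hj; rewrite /cov H2 //; apply/allP/allP => h x.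
  move=> xS; case xj: (x \in B j).
    by apply/hasP; exists j => //; rewrite memJS jr hj.
  have := h x; rewrite inE xj xS => /(_ isT) /hasP[l].
  by rewrite mem_filter => /andP[_ lJ] xl; apply/hasP; exists l.
rewrite inE => /andP[xj xS]; have /hasP[l lJ xl] := h x xS.
apply/hasP; exists l => //; rewrite mem_filter lJ andbT.
by apply/eqP => elj; move: xj; rewrite -elj xl.
Qed.

Lemma H4 S : cov S -> pc S.
Proof.
move=> hc n.
have key : forall y, y \in S -> exists2 l, (l < r)%N /\ B l `<=` S & y \in B l.
  move=> y yS; have /hasP[l lJ yl] := allP hc y yS.
  by exists l => //; move: lJ; rewrite memJS => /andP[].
apply/idP/idP => h.
  have [l [lr lS] yl] := key _ h.
  by apply: (fsubsetP lS); rewrite -(Bpc _ lr).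
have [l [lr lS] yl] := key _ h.
by apply: (fsubsetP lS); rewrite (Bpc _ lr).
Qed.

Lemma sumr_const_seq (I : Type) (s : seq I) (c : F) :
  \sum_(i <- s) c = c *+ size s.
Proof. by elim: s => [|x s IH]; rewrite ?big_nil ?big_cons ?IH ?mulrS. Qed.

Lemma gexp_aB m S : gexp aB m S = fm m S.
Proof.
elim: m S => [|m IH] S.
  rewrite /gexp /= /gone fsfun_fun inE /fm fact0.
  case: (eqVneq S fset0) => [->|nS].
    have -> : JS fset0 = [::].
      apply/eqP; rewrite -size_eq0 size_filter -leqn0 leqNgt -has_count.
      apply/hasP => -[l]; rewrite mem_iota0 => lr /fsubsetP h.
      by case/fset0Pn: (Bne _ lr) => x /h; rewrite inE.
    by [].
  rewrite /cov; case: (JS S) => [|l s]; last by rewrite andbF.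
  case/fset0Pn: nS => x xS.
  by have -> : all (fun x0 => has (fun j => x0 \in B j) [::]) S = false
    by apply/negP => /allP /(_ x xS).
rewrite /gexp iterS -/(gexp aB m).
rewrite (gmulE _ _ _ _ _ (finsupp_fsub _ KB (fun _ => 1))) sum_KB.
rewrite big_seq.
under eq_bigr => j jI.
  rewrite fsfun_fun seq_fsetE map_f // mulr1 IH.
  over.
rewrite /=.
transitivity (\sum_(j <- iota 0 r) (if cov S && (size (JS S) == m.+1)
   then (if B j `<=` S then (m`!)%:R else 0 : F) else 0)).
  rewrite [RHS]big_seq; apply: eq_bigr => j; rewrite mem_iota0 => jr.
  case: ifP => hj; last by case: ifP.
  have sz : (0 < size (JS S))%N.
    rewrite lt0n size_eq0; apply/eqP => e; move: (memJS j S).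
    by rewrite e jr hj.
  rewrite /fm H3 // H2 // -rem_filter ?JS_uniq // size_rem ?memJS ?jr ?hj //.
  case hc: (cov S) => /=; last by rewrite mulr0.
  rewrite sign_even ?mul1r; last 2 first.
  - exact: Bpc.
  - by move=> x xj; rewrite inE xj.
  by case: (size (JS S)) sz.
rewrite /fm; case hc: (cov S && (size (JS S) == m.+1)); last by rewrite big1.
case/andP: hc => _ /eqP hs.
rewrite -big_mkcond /= -big_filter sumr_const_seq -/(JS S) hs.
by rewrite factS mulnC natrM mulr_natr.
Qed.

Definition UB := seq_fset tt (flatten [seq enum_fset (B j) | j <- iota 0 r]).

Lemma memUB x : (x \in UB) = has (fun j => x \in B j) (iota 0 r).
Proof.
rewrite seq_fsetE; apply/flattenP/hasP.
  by case=> s /mapP[j jI ->] xs; exists j.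
by case=> j jI xj; exists (enum_fset (B j)) => //; apply: map_f.
Qed.

Lemma gexp_aB_r : gexp aB r = mono F UB (r`!)%:R.
Proof.
apply/fsfunP => S; rewrite gexp_aB monoE /fm.
have -> : (size (JS S) == r) = all (fun j => B j `<=` S) (iota 0 r).
  by rewrite all_count size_filter size_iota.
congr (if _ then _ else _).
apply/idP/eqP.
  case/andP => hc /allP ha; apply/fsetP => x; rewrite memUB.
  apply/idP/hasP.
    move=> xS; have /hasP[l lJ xl] := allP hc x xS.
    by exists l => //; move: lJ; rewrite mem_filter => /andP[].
  by case=> j jI xj; apply: (fsubsetP (ha j jI)).
move=> ->; apply/andP; split.
  apply/allP => x; rewrite memUB => /hasP[j jI xj].
  apply/hasP; exists j => //; rewrite mem_filter jI andbT.
  by apply/fsubsetP => y yj; rewrite memUB; apply/hasP; exists j.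
apply/allP => j jI; apply/fsubsetP => y yj; rewrite memUB; apply/hasP; exists j.
  by [].
by [].
Qed.

Lemma pc_UB : pc UB.
Proof.
move=> n; rewrite !memUB; apply: eq_in_has => j; rewrite mem_iota0 => jr.
exact: Bpc.
Qed.
End Pow.


Section Blocks.
Local Open Scope fset_scope.

Definition qq (i t j l : nat) : nat := choice.pickle (i, t, j, l).
Definition QQ i t j := [seq qq i t j l | l <- iota 0 i].
Definition sb i t j := [seq y.*2 | y <- QQ i t j] ++ [seq y.*2.+1 | y <- QQ i t j].
Definition blk i t j : {fset nat} := seq_fset tt (sb i t j).

Lemma half_dS n : (n.*2.+1)./2 = n.
Proof. by rewrite -uphalfE uphalf_double. Qed.

Lemma mem_blk i t j x : (x \in blk i t j) = (x./2 \in QQ i t j).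
Proof.
rewrite seq_fsetE mem_cat; apply/orP/idP.
  by case=> /mapP[y yQ ->]; rewrite ?doubleK ?half_dS.
move=> h; rewrite -[x](odd_double_half x); case: (odd x) => /=; [right|left];
  by apply/mapP; exists x./2.
Qed.

Lemma pc_blk i t j : pc (blk i t j).
Proof. by move=> n; rewrite !mem_blk doubleK half_dS. Qed.

Lemma blk_ne i t j : (0 < i)%N -> blk i t j != fset0.
Proof.
move=> hi; apply/fset0Pn; exists (qq i t j 0).*2.
by rewrite mem_blk doubleK; apply: map_f; rewrite mem_iota0.
Qed.

Lemma blk_disj i t j i' t' j' x : x \in blk i t j -> x \in blk i' t' j' ->
  (i, t, j) = (i', t', j').
Proof.
rewrite !mem_blk => /mapP[l _ e1] /mapP[l' _ e2].
by move: e2; rewrite e1 => /(pcan_inj choice.pickleK) [-> -> -> _].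
Qed.

Lemma gdeg_blk i t j : gdeg (blk i t j) = i.
Proof.
have uQ : uniq (QQ i t j).
  rewrite map_inj_uniq ?iota_uniq // => l1 l2 /(pcan_inj choice.pickleK) [].
  by [].
have dinj : injective double by move=> a b /(congr1 half); rewrite !doubleK.
have sdinj : injective (fun y => y.*2.+1) by move=> a b [] /dinj.
have us : uniq (sb i t j).
  rewrite /sb cat_uniq (map_inj_uniq dinj) (map_inj_uniq sdinj) uQ /= andbT.
  apply/hasP => -[x /mapP[y _ ->] /mapP[z _ /(congr1 odd)]].
  by rewrite /= !odd_double.
rewrite /gdeg size_filter.
have := seq_fset_perm tt (sb i t j); rewrite undup_id // => /permP ->.
rewrite count_cat !count_map.
rewrite (eq_count (a2 := predT)) ?count_predT; last by move=> y /=; rewrite odd_double.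
rewrite (eq_count (a2 := pred0)) ?count_pred0; last by move=> y /=; rewrite odd_double.
by rewrite size_iota addn0.
Qed.
End Blocks.


Section Final.
Local Open Scope fset_scope.
Local Open Scope ring_scope.
Variable F : fieldType.

Definition dsj (X Y : {fset nat}) := all (fun x => x \notin Y) X.

Lemma foldl_mono (T : eqType) (s : seq T) (U : T -> {fset nat}) (c : T -> F)
    A c0 : pc A -> (forall p, p \in s -> pc (U p)) ->
  (forall p, p \in s -> dsj A (U p)) ->
  pairwise (fun p q => dsj (U p) (U q)) s ->
  exists A', foldl (@gmul F) (mono F A c0) (map (fun p => mono F (U p) (c p)) s)
     = mono F A' (c0 * \prod_(p <- s) c p).
Proof.
elim: s A c0 => [|p s IH] A c0 hA hU hd hpw /=.
  by exists A; rewrite big_nil mulr1.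
rewrite pairwise_cons in hpw; case/andP: hpw => hp hpw.
rewrite (@mono_mul F A (U p) c0 (c p) hA); last first.
  by move=> x xA; apply: (allP (hd p (mem_head _ _))) x xA.
have [|||A' ->] := IH (A `|` U p) (c0 * c p) _ _ _ hpw.
- by move=> n; rewrite !inE hA (hU p (mem_head _ _)).
- by move=> q qs; apply: hU; rewrite inE qs orbT.
- move=> q qs; apply/allP => x; rewrite inE => /orP[xA|xp].
    by apply: (allP (hd q _)) x xA; rewrite inE qs orbT.
  by apply: (allP (allP hp q qs)) x xp.
by exists A'; rewrite big_cons mulrA.
Qed.

Lemma fact_neq0 p n : p \in [pchar F] -> (n < p)%N -> (n`!)%:R != 0 :> F.
Proof.
move=> hp hn; rewrite -(dvdn_pcharf hp).
have pp := pcharf_prime hp.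
elim: n hn => [|n IH] hn.
  rewrite fact0 dvdn1; apply/eqP => e; by rewrite e in pp.
rewrite factS (Euclid_dvdM _ _ pp) negb_or IH ?andbT; last exact: ltnW.
apply/negP => /(dvdn_leq (ltn0Sn _)); by rewrite leqNgt hn.
Qed.

Lemma pairwise_of_uniq (T : eqType) (R : rel T) (s : seq T) : uniq s ->
  {in s &, forall x y, x != y -> R x y} -> pairwise R s.
Proof.
elim: s => [|x s IH] //= /andP[xs us] h; rewrite IH ?andbT //.
  apply/allP => y ys; apply: h; rewrite ?inE ?eqxx ?ys ?orbT //.
  by apply/eqP => e; rewrite e ys in xs.
by move=> u v us' vs; apply: h; rewrite inE ?us' ?vs orbT.
Qed.
End Final.

Local Open Scope ring_scope.

Theorem mainTheorem9 (F : fieldType) (p k : nat) (h : nat -> nat)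
    (r : nat -> nat -> nat) :
  (forall s : seq F, exists x : F, x \notin s) ->
  p \in [pchar F] -> (2 < p)%N ->
  (0 < k)%N ->
  (\max_(1 <= i < k.+1) \max_(t < h i) r i t < p)%N ->
  exists a : nat -> nat -> Grass F,
    (forall i t, (1 <= i <= k)%N -> (t < h i)%N -> ghomog i (a i t)) /\
    gmonomial_eval k h r a <> gzero F.
Proof.
move=> _ hp hp2 hk hmax.
pose a := fun i t => aB F (r i t) (blk i t).
exists a; split.
  move=> i t /andP[hi hik] ht S hS.
  have := fsubsetP (finsupp_fsub F (KB (r i t) (blk i t)) (fun _ => 1)) S hS.
  rewrite /KB seq_fsetE => /mapP[j _ ->]; exact: gdeg_blk.
have hr : forall i t, (1 <= i <= k)%N -> (t < h i)%N -> (r i t < p)%N.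
  move=> i t hi ht; apply: leq_ltn_trans hmax.
  have hin : i \in index_iota 1 k.+1 by rewrite mem_index_iota ltnS.
  have h1 := @leq_bigmax_seq nat (index_iota 1 k.+1) xpredT
     (fun i => \max_(t < h i) r i t) i hin isT.
  have h2 := @leq_bigmax _ (fun t : 'I_(h i) => r i t) (Ordinal ht).
  exact: leq_trans h2 h1.
have hG : forall i t, (1 <= i <= k)%N -> (t < h i)%N ->
    gexp (a i t) (r i t) = mono F (UB (r i t) (blk i t)) ((r i t)`!)%:R.
  move=> i t /andP[hi _] _; apply: gexp_aB_r.
  - by move=> j _; apply: blk_ne.
  - move=> j l _ _ njl x xj; apply/negP => xl.
    move: (blk_disj _ _ _ _ _ _ _ xj xl) => [] e.
    by rewrite e eqxx in njl.
  - by move=> j _; apply: pc_blk.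
pose idx := [seq (i, t) | i <- iota 1 k, t <- iota 0 (h i)].
have memidx : forall pr, pr \in idx -> (1 <= pr.1 <= k)%N && (pr.2 < h pr.1)%N.
  move=> pr /allpairsPdep[i [t [hi ht ->]]] /=.
  by rewrite mem_iota0 in ht; rewrite mem_iota add1n ltnS in hi; rewrite hi ht.
pose U := fun pr : nat * nat => UB (r pr.1 pr.2) (blk pr.1 pr.2).
pose c := fun pr : nat * nat => ((r pr.1 pr.2)`!)%:R : F.
rewrite /gmonomial_eval.
rewrite (_ : flatten _ = map (fun pr => gexp (a pr.1 pr.2) (r pr.1 pr.2)) idx);
  last by rewrite map_allpairs.
have -> : map (fun pr => gexp (a pr.1 pr.2) (r pr.1 pr.2)) idx =
          map (fun pr => mono F (U pr) (c pr)) idx.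
  apply/eq_in_map => pr /memidx /andP[h1 h2]; exact: hG.
change (gone F) with (mono F fset0 1).
have [||||A' ->] := @foldl_mono F _ idx U c fset0 1.
- by move=> n; rewrite !inE.
- by move=> pr _; apply: pc_UB => j _; apply: pc_blk.
- by move=> pr _; apply/allP => x; rewrite inE.
- apply: pairwise_of_uniq.
    apply: allpairs_uniq_dep; first exact: iota_uniq.
      by move=> i _; exact: iota_uniq.
    by move=> [i1 t1] [i2 t2] _ _ /= [] -> ->.
  move=> [i t] [i' t'] _ _ npr; apply/allP => x.
  rewrite memUB => /hasP[j _ xj]; apply/negP; rewrite memUB => /hasP[j' _ xj'].
  case: (blk_disj _ _ _ _ _ _ _ xj xj') => e1 e2 _.
  by rewrite e1 e2 eqxx in npr.
move/fsfunP/(_ A'); rewrite monoE eqxx /gzero fsfun_fun inE; apply/eqP.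
rewrite mul1r prodf_seq_neq0; apply/allP => pr hpr /=.
case/andP: (memidx pr hpr) => h1 h2.
exact: fact_neq0 hp (hr _ _ h1 h2).
Qed.
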